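(* Let $E$ be a Banach lattice, $u_0\in E^+$, $\delta>0$, and let $D\subseteq (E^* )^+$ be such that $\langle u_0,x^*\rangle\ge\delta$ for all $x^*\in D$. If $D$ is almost order bounded with respect to $\rho_{u_0}$, then there exists $M\in\mathbb N$ such that every set of mutually disjoint elements of $D$ contains at most $M$ elements.
   Context: For $u_0\in E$, $\rho_{u_0}$ is the Riesz seminorm on $E^*$ given by $\rho_{u_0}(x^* )=\langle |u_0|,|x^*|\rangle$, and $B_{\rho_{u_0}}=\{x^*\in E^*:\rho_{u_0}(x^* )\le 1\}$. A set $D\subseteq E^*$ is almost order bounded with respect to $\rho_{u_0}$ if for every $\varepsilon>0$ there exists $y^*\in (E^* )^+$ with $D\subseteq[-y^*,y^*]+\varepsilon B_{\rho_{u_0}}$. *)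

(* Defs.v *)
From Stdlib Require Import Reals List.
Open Scope R_scope.

Record BanachLattice := {
  BL_carrier :> Type;
  bl_add : BL_carrier -> BL_carrier -> BL_carrier;
  bl_zero : BL_carrier;
  bl_opp : BL_carrier -> BL_carrier;
  bl_scal : R -> BL_carrier -> BL_carrier;
  bl_addA : forall x y z, bl_add x (bl_add y z) = bl_add (bl_add x y) z;
  bl_addC : forall x y, bl_add x y = bl_add y x;
  bl_add0 : forall x, bl_add x bl_zero = x;
  bl_addN : forall x, bl_add x (bl_opp x) = bl_zero;
  bl_scalA : forall a b x, bl_scal a (bl_scal b x) = bl_scal (a * b) x;
  bl_scal1 : forall x, bl_scal 1 x = x;
  bl_scalDr : forall a x y, bl_scal a (bl_add x y) = bl_add (bl_scal a x) (bl_scal a y);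
  bl_scalDl : forall a b x, bl_scal (a + b) x = bl_add (bl_scal a x) (bl_scal b x);
  bl_le : BL_carrier -> BL_carrier -> Prop;
  bl_le_refl : forall x, bl_le x x;
  bl_le_trans : forall x y z, bl_le x y -> bl_le y z -> bl_le x z;
  bl_le_anti : forall x y, bl_le x y -> bl_le y x -> x = y;
  bl_le_add : forall x y z, bl_le x y -> bl_le (bl_add x z) (bl_add y z);
  bl_le_scal : forall a x y, 0 <= a -> bl_le x y -> bl_le (bl_scal a x) (bl_scal a y);
  bl_join : BL_carrier -> BL_carrier -> BL_carrier;
  bl_join_ubl : forall x y, bl_le x (bl_join x y);
  bl_join_ubr : forall x y, bl_le y (bl_join x y);
  bl_join_least : forall x y z, bl_le x z -> bl_le y z -> bl_le (bl_join x y) z;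
  bl_norm : BL_carrier -> R;
  bl_norm_eq0 : forall x, bl_norm x = 0 -> x = bl_zero;
  bl_normZ : forall a x, bl_norm (bl_scal a x) = Rabs a * bl_norm x;
  bl_norm_triangle : forall x y, bl_norm (bl_add x y) <= bl_norm x + bl_norm y;
  bl_norm_lattice : forall x y,
      bl_le (bl_join x (bl_opp x)) (bl_join y (bl_opp y)) -> bl_norm x <= bl_norm y;
  bl_complete : forall u : nat -> BL_carrier,
      (forall eps, 0 < eps -> exists N, forall n m, (N <= n)%nat -> (N <= m)%nat ->
          bl_norm (bl_add (u n) (bl_opp (u m))) < eps) ->
      exists l, forall eps, 0 < eps -> exists N, forall n, (N <= n)%nat ->
          bl_norm (bl_add (u n) (bl_opp l)) < eps
}.

Arguments bl_add {_}. Arguments bl_zero {_}. Arguments bl_opp {_}.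
Arguments bl_scal {_}. Arguments bl_le {_}. Arguments bl_join {_}.
Arguments bl_norm {_}.

Definition bl_abs {E : BanachLattice} (x : E) : E := bl_join x (bl_opp x).

Definition is_dual {E : BanachLattice} (f : E -> R) : Prop :=
  (forall x y, f (bl_add x y) = f x + f y) /\
  (forall a x, f (bl_scal a x) = a * f x) /\
  (exists C, forall x, Rabs (f x) <= C * bl_norm x).

Definition dual_le {E : BanachLattice} (f g : E -> R) : Prop :=
  forall x : E, bl_le bl_zero x -> f x <= g x.

Definition dual_pos {E : BanachLattice} (f : E -> R) : Prop :=
  dual_le (fun _ => 0) f.

Definition is_dual_modulus {E : BanachLattice} (f m : E -> R) : Prop :=
  is_dual m /\ dual_le f m /\ dual_le (fun x => - f x) m /\
  (forall g, is_dual g -> dual_le f g -> dual_le (fun x => - f x) g -> dual_le m g).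

(** rho_{u0}(f) <= r, where rho_{u0}(f) = <|u0|, |f|>. *)
Definition rho_le {E : BanachLattice} (u0 : E) (f : E -> R) (r : R) : Prop :=
  exists m, is_dual_modulus f m /\ m (bl_abs u0) <= r.

(** D is almost order bounded w.r.t. rho_{u0}:
    forall eps > 0, exists y in (E^* )^+, D subset [-y,y] + eps B_{rho_{u0}}. *)
Definition almost_order_bounded {E : BanachLattice} (u0 : E) (D : (E -> R) -> Prop) : Prop :=
  forall eps, 0 < eps ->
    exists y, is_dual y /\ dual_pos y /\
      forall x, D x ->
        exists z b, is_dual z /\ is_dual b /\
          dual_le (fun v => - y v) z /\ dual_le z y /\
          rho_le u0 b 1 /\
          (forall v, x v = z v + eps * b v).

(** Disjointness in E^*: |f| /\ |g| = 0 (0 is the infimum of {|f|,|g|} in E^* ). *)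
Definition dual_disjoint {E : BanachLattice} (f g : E -> R) : Prop :=
  exists mf mg, is_dual_modulus f mf /\ is_dual_modulus g mg /\
    dual_pos mf /\ dual_pos mg /\
    (forall h, is_dual h -> dual_le h mf -> dual_le h mg -> dual_le h (fun _ => 0)).

(* Main.v *)
Require Import Defs.
From Stdlib Require Import Reals List Lra ZArith ClassicalEpsilon.
Open Scope R_scope.

#[local] Arguments bl_addA {_}.
#[local] Arguments bl_addC {_}.
#[local] Arguments bl_add0 {_}.
#[local] Arguments bl_addN {_}.
#[local] Arguments bl_scalA {_}.
#[local] Arguments bl_scal1 {_}.
#[local] Arguments bl_scalDr {_}.
#[local] Arguments bl_scalDl {_}.
#[local] Arguments bl_le_refl {_}.
#[local] Arguments bl_le_trans {_}.
#[local] Arguments bl_le_anti {_}.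
#[local] Arguments bl_le_add {_}.
#[local] Arguments bl_le_scal {_}.
#[local] Arguments bl_join_ubl {_}.
#[local] Arguments bl_join_ubr {_}.
#[local] Arguments bl_join_least {_}.
#[local] Arguments bl_norm_eq0 {_}.
#[local] Arguments bl_normZ {_}.
#[local] Arguments bl_norm_triangle {_}.
#[local] Arguments bl_norm_lattice {_}.

Local Infix "⊕" := bl_add (at level 50, left associativity).
Local Notation "⊖ x" := (bl_opp x) (at level 35, right associativity).
Local Infix "≼" := bl_le (at level 70).


Lemma add0l {E : BanachLattice} (x : E) : bl_zero ⊕ x = x. Proof. rewrite bl_addC; apply bl_add0. Qed.
Lemma addNl {E : BanachLattice} (x : E) : ⊖x ⊕ x = bl_zero. Proof. rewrite bl_addC; apply bl_addN. Qed.
Lemma addK {E : BanachLattice} (x : E) (y : E) : x ⊕ y ⊕ ⊖y = x. Proof. rewrite <- bl_addA, bl_addN, bl_add0; auto. Qed.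
Lemma addNK {E : BanachLattice} (x : E) (y : E) : x ⊕ ⊖y ⊕ y = x. Proof. rewrite <- bl_addA, addNl, bl_add0; auto. Qed.
Lemma addKl {E : BanachLattice} (x : E) (y : E) : ⊖x ⊕ (x ⊕ y) = y. Proof. rewrite bl_addA, addNl, add0l; auto. Qed.
Lemma opp_unique {E : BanachLattice} (x : E) (y : E) : x ⊕ y = bl_zero -> y = ⊖x.
Proof. intro H. rewrite <- (addKl x y), H, bl_add0; auto. Qed.
Lemma oppK {E : BanachLattice} (x : E) : ⊖⊖x = x. Proof. symmetry; apply opp_unique; apply addNl. Qed.
Lemma opp0 {E : BanachLattice} : ⊖(@bl_zero E) = bl_zero. Proof. symmetry; apply opp_unique; apply bl_add0. Qed.
Lemma add4 {E : BanachLattice} (a : E) (b : E) (c : E) (d : E) : a ⊕ b ⊕ (c ⊕ d) = a ⊕ c ⊕ (b ⊕ d).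
Proof. rewrite <- !bl_addA. f_equal. rewrite !bl_addA, (bl_addC b c); auto. Qed.
Lemma opp_add {E : BanachLattice} (x : E) (y : E) : ⊖(x ⊕ y) = ⊖x ⊕ ⊖y.
Proof. symmetry; apply opp_unique. rewrite add4, !bl_addN, bl_add0; auto. Qed.
Lemma swap_r {E : BanachLattice} (a : E) (b : E) (c : E) : a ⊕ b ⊕ c = a ⊕ c ⊕ b.
Proof. rewrite <- !bl_addA, (bl_addC b c); auto. Qed.

Lemma le_add2 {E : BanachLattice} (a : E) (b : E) (c : E) (d : E) : a ≼ b -> c ≼ d -> a ⊕ c ≼ b ⊕ d.
Proof.
  intros H1 H2. apply bl_le_trans with (b ⊕ c). apply bl_le_add; auto.
  rewrite (bl_addC b c), (bl_addC b d). apply bl_le_add; auto.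
Qed.
Lemma le_addl {E : BanachLattice} (c : E) (a : E) (b : E) : a ≼ b -> c ⊕ a ≼ c ⊕ b.
Proof. intro; apply le_add2; auto using bl_le_refl. Qed.
Lemma le_opp {E : BanachLattice} (x : E) (y : E) : x ≼ y -> ⊖y ≼ ⊖x.
Proof.
  intro H. pose proof (bl_le_add _ _ (⊖x ⊕ ⊖y) H) as H1.
  rewrite bl_addA, bl_addN, add0l in H1.
  rewrite (bl_addC (⊖x) (⊖y)), bl_addA, bl_addN, add0l in H1. auto.
Qed.
Lemma sub_pos {E : BanachLattice} (x : E) (y : E) : x ≼ y -> bl_zero ≼ y ⊕ ⊖x.
Proof. intro H. pose proof (bl_le_add _ _ (⊖x) H) as H1. rewrite bl_addN in H1; auto. Qed.
Lemma pos_sub {E : BanachLattice} (x : E) (y : E) : bl_zero ≼ y ⊕ ⊖x -> x ≼ y.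
Proof. intro H. pose proof (bl_le_add _ _ x H) as H1. rewrite add0l, addNK in H1; auto. Qed.
Lemma move_l {E : BanachLattice} (c : E) (a : E) (z : E) : c ⊕ a ≼ z -> a ≼ ⊖c ⊕ z.
Proof. intro H. pose proof (le_addl (⊖c) _ _ H) as H1. rewrite addKl in H1; auto. Qed.

Lemma join_comm {E : BanachLattice} (x : E) (y : E) : bl_join x y = bl_join y x.
Proof. apply bl_le_anti; apply bl_join_least; auto using bl_join_ubl, bl_join_ubr. Qed.
Lemma join_transl {E : BanachLattice} (c : E) (a : E) (b : E) : c ⊕ bl_join a b = bl_join (c ⊕ a) (c ⊕ b).
Proof.
  apply bl_le_anti.
  - pose proof (bl_join_least a b (⊖c ⊕ bl_join (c ⊕ a) (c ⊕ b))) as H.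
    assert (H1 : bl_join a b ≼ ⊖c ⊕ bl_join (c ⊕ a) (c ⊕ b)).
    { apply H; apply move_l; auto using bl_join_ubl, bl_join_ubr. }
    pose proof (le_addl c _ _ H1) as H2. rewrite bl_addA, bl_addN, add0l in H2. auto.
  - apply bl_join_least; apply le_addl; auto using bl_join_ubl, bl_join_ubr.
Qed.
Lemma pp_decomp {E : BanachLattice} (x : E) : bl_join x bl_zero ⊕ ⊖(bl_join (⊖x) bl_zero) = x.
Proof.
  assert (H : bl_join x bl_zero = x ⊕ bl_join (⊖x) bl_zero).
  { rewrite join_transl, bl_addN, bl_add0, join_comm; auto. }
  rewrite H, addK; auto.
Qed.

Lemma scal_x0 {E : BanachLattice} (r : R) : bl_scal r (@bl_zero E) = bl_zero.
Proof.
  assert (H : bl_scal r bl_zero ⊕ bl_scal r bl_zero = bl_scal r (@bl_zero E)).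
  { rewrite <- bl_scalDr, bl_add0; auto. }
  rewrite <- (addK (bl_scal r bl_zero) (bl_scal r bl_zero)) at 1. rewrite H, bl_addN; auto.
Qed.
Lemma scal_0x {E : BanachLattice} (x : E) : bl_scal 0 x = bl_zero.
Proof.
  assert (H : bl_scal 0 x ⊕ bl_scal 0 x = bl_scal 0 x).
  { rewrite <- bl_scalDl, Rplus_0_r; auto. }
  rewrite <- (addK (bl_scal 0 x) (bl_scal 0 x)) at 1. rewrite H, bl_addN; auto.
Qed.
Lemma scal_opp {E : BanachLattice} (r : R) (x : E) : bl_scal r (⊖x) = ⊖ bl_scal r x.
Proof. apply opp_unique. rewrite <- bl_scalDr, bl_addN, scal_x0; auto. Qed.
Lemma scalN {E : BanachLattice} (r : R) (x : E) : bl_scal (-r) x = ⊖ bl_scal r x.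
Proof. apply opp_unique. rewrite <- bl_scalDl, Rplus_opp_r, scal_0x; auto. Qed.
Lemma scal_pos {E : BanachLattice} (r : R) (u : E) : 0 <= r -> bl_zero ≼ u -> bl_zero ≼ bl_scal r u.
Proof. intros. rewrite <- (scal_x0 r). apply bl_le_scal; auto. Qed.

Lemma norm_nonneg {E : BanachLattice} (x : E) : 0 <= bl_norm x.
Proof.
  pose proof (bl_norm_triangle x (bl_scal (-1) x)) as H.
  rewrite <- (bl_scal1 x) in H at 1. rewrite <- bl_scalDl, Rplus_opp_r, scal_0x in H.
  rewrite <- (scal_x0 0) in H. rewrite !bl_normZ, Rabs_R0 in H.
  rewrite Rabs_left in H by lra. lra.
Qed.

Lemma half_pos {E : BanachLattice} (a : E) : bl_zero ≼ a ⊕ a -> bl_zero ≼ a.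
Proof.
  intro H. assert (H2 : a ⊕ a = bl_scal 2 a).
  { replace 2 with (1 + 1) by lra. rewrite bl_scalDl, bl_scal1; auto. }
  rewrite H2 in H. pose proof (bl_le_scal (/2) _ _ ltac:(lra) H) as H3.
  rewrite scal_x0, bl_scalA, Rinv_l, bl_scal1 in H3; auto; lra.
Qed.
Lemma abs_pos {E : BanachLattice} (x : E) : bl_zero ≼ bl_join x (⊖x).
Proof.
  apply half_pos. rewrite <- (bl_addN x). apply le_add2; auto using bl_join_ubl, bl_join_ubr.
Qed.
Lemma abs_of_pos {E : BanachLattice} (u : E) : bl_zero ≼ u -> bl_abs u = u.
Proof.
  intro H. unfold bl_abs. apply bl_le_anti.
  - apply bl_join_least. apply bl_le_refl. apply bl_le_trans with bl_zero; auto.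
    rewrite <- opp0. apply le_opp; auto.
  - apply bl_join_ubl.
Qed.
Lemma norm_pp {E : BanachLattice} (x : E) : bl_norm (bl_join x bl_zero) <= bl_norm x.
Proof.
  apply bl_norm_lattice. apply bl_join_least.
  - apply bl_join_least. apply bl_join_ubl. apply abs_pos.
  - apply bl_le_trans with bl_zero. eapply bl_le_trans; [apply le_opp, bl_join_ubr| rewrite opp0; apply bl_le_refl]. apply abs_pos.
Qed.
Lemma norm_pn {E : BanachLattice} (x : E) : bl_norm (bl_join (⊖x) bl_zero) <= bl_norm x.
Proof.
  apply bl_norm_lattice. apply bl_join_least.
  - apply bl_join_least. apply bl_join_ubr. apply abs_pos.
  - apply bl_le_trans with bl_zero. eapply bl_le_trans; [apply le_opp, bl_join_ubr| rewrite opp0; apply bl_le_refl]. apply abs_pos.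
Qed.

Lemma df_add {E : BanachLattice} (f : E -> R) : is_dual f -> forall x y, f (x ⊕ y) = f x + f y.
Proof. intros [H _]; auto. Qed.
Lemma df_scal {E : BanachLattice} (f : E -> R) : is_dual f -> forall a x, f (bl_scal a x) = a * f x.
Proof. intros [_ [H _]]; auto. Qed.
Lemma df_zero {E : BanachLattice} (f : E -> R) : is_dual f -> f bl_zero = 0.
Proof. intro Hf. pose proof (df_add f Hf bl_zero bl_zero) as H. rewrite bl_add0 in H. lra. Qed.
Lemma df_opp {E : BanachLattice} (f : E -> R) : is_dual f -> forall x, f (⊖x) = - f x.
Proof. intros Hf x. pose proof (df_add f Hf x (⊖x)) as H. rewrite bl_addN, df_zero in H; auto. lra. Qed.

Lemma dual_lin {E : BanachLattice} (f g : E -> R) (a b : R) :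
  is_dual f -> is_dual g -> is_dual (fun v => a * f v + b * g v).
Proof.
  intros Hf Hg. pose proof Hf as [_ [_ [Cf HCf]]]. pose proof Hg as [_ [_ [Cg HCg]]].
  split; [|split].
  - intros x y. rewrite (df_add f Hf), (df_add g Hg). ring.
  - intros c x. rewrite (df_scal f Hf), (df_scal g Hg). ring.
  - exists (Rabs a * Cf + Rabs b * Cg). intros x.
    eapply Rle_trans. apply Rabs_triang. rewrite !Rabs_mult.
    pose proof (HCf x). pose proof (HCg x).
    assert (Rabs a * Rabs (f x) <= Rabs a * (Cf * bl_norm x)) by (apply Rmult_le_compat_l; auto using Rabs_pos).
    assert (Rabs b * Rabs (g x) <= Rabs b * (Cg * bl_norm x)) by (apply Rmult_le_compat_l; auto using Rabs_pos).
    lra.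
Qed.
Lemma dual_ext {E : BanachLattice} (f g : E -> R) : (forall v, f v = g v) -> is_dual f -> is_dual g.
Proof.
  intros Heq [H1 [H2 [C H3]]]. split; [|split].
  - intros; rewrite <- !Heq; auto.
  - intros; rewrite <- !Heq; auto.
  - exists C; intros; rewrite <- Heq; auto.
Qed.

Lemma riesz {E : BanachLattice} (v u1 u2 : E) :
  bl_zero ≼ v -> bl_zero ≼ u1 -> bl_zero ≼ u2 -> v ≼ u1 ⊕ u2 ->
  exists v1 v2, bl_zero ≼ v1 /\ v1 ≼ u1 /\ bl_zero ≼ v2 /\ v2 ≼ u2 /\ v = v1 ⊕ v2.
Proof.
  intros pv p1 p2 Hv.
  set (v2 := bl_join bl_zero (v ⊕ ⊖u1)).
  exists (v ⊕ ⊖v2), v2.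
  assert (Hd : v ⊕ ⊖u1 ≼ v2) by apply bl_join_ubr.
  assert (Hv2v : v2 ≼ v).
  { apply bl_join_least; auto.
    apply bl_le_trans with (v ⊕ bl_zero). apply le_addl.
    eapply bl_le_trans; [apply le_opp; exact p1| rewrite opp0; apply bl_le_refl].
    rewrite bl_add0; apply bl_le_refl. }
  split; [|split; [|split; [|split]]].
  - apply sub_pos; auto.
  - pose proof (le_opp _ _ Hd) as H1. rewrite opp_add, oppK in H1.
    pose proof (le_addl v _ _ H1) as H2. rewrite bl_addA, bl_addN, add0l in H2. auto.
  - apply bl_join_ubl.
  - apply bl_join_least; auto.
    pose proof (bl_le_add _ _ (⊖u1) Hv) as H1. rewrite (bl_addC u1 u2), addK in H1. auto.
  - rewrite addNK; auto.
Qed.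

Definition glbH {E : BanachLattice} (f g : E -> R) (u : E) (m : R) :=
  (forall v, bl_zero ≼ v -> v ≼ u -> m <= f v + g (u ⊕ ⊖v)) /\
  (forall r, (forall v, bl_zero ≼ v -> v ≼ u -> r <= f v + g (u ⊕ ⊖v)) -> r <= m).

Definition posdual {E : BanachLattice} (f : E -> R) := is_dual f /\ dual_pos f.

Lemma glbH_ex {E : BanachLattice} (f g : E -> R) (u : E) :
  posdual f -> posdual g -> bl_zero ≼ u -> exists m, glbH f g u m.
Proof.
  intros [Hf Hfp] [Hg Hgp] pu.
  set (T := fun r => exists v, bl_zero ≼ v /\ v ≼ u /\ r = -(f v + g (u ⊕ ⊖v))).
  assert (Hb : bound T).
  { exists 0. intros r [v [pv [vu ->]]].
    pose proof (Hfp v pv). pose proof (Hgp _ (sub_pos _ _ vu)). simpl in *. lra. }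
  assert (Hne : exists r, T r).
  { exists (-(f bl_zero + g (u ⊕ ⊖bl_zero))). exists bl_zero.
    split; [apply bl_le_refl|split; auto]. }
  destruct (completeness T Hb Hne) as [L [Hub Hl]].
  exists (-L). split.
  - intros v pv vu. assert (T (-(f v + g (u ⊕ ⊖v)))) by (exists v; auto).
    pose proof (Hub _ H). lra.
  - intros r Hr. assert (L <= -r).
    { apply Hl. intros x [v [pv [vu ->]]]. pose proof (Hr v pv vu). lra. }
    lra.
Qed.

Definition Hm {E : BanachLattice} (f g : E -> R) (u : E) : R :=
  epsilon (inhabits 0) (fun m => glbH f g u m).

Lemma Hm_spec {E : BanachLattice} (f g : E -> R) (u : E) :
  posdual f -> posdual g -> bl_zero ≼ u -> glbH f g u (Hm f g u).
Proof. intros. unfold Hm. apply epsilon_spec. apply glbH_ex; auto. Qed.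

Lemma pos0 {E : BanachLattice} : @bl_zero E ≼ bl_zero. Proof. apply bl_le_refl. Qed.
Lemma pos_add {E : BanachLattice} (a b : E) : bl_zero ≼ a -> bl_zero ≼ b -> bl_zero ≼ a ⊕ b.
Proof. intros. rewrite <- (bl_add0 bl_zero). apply le_add2; auto. Qed.

Ltac lin Hf Hg := rewrite ?(df_add _ Hf), ?(df_opp _ Hf), ?(df_add _ Hg), ?(df_opp _ Hg),
   ?(df_scal _ Hf), ?(df_scal _ Hg), ?(df_zero _ Hf), ?(df_zero _ Hg) in *.

Lemma Hm_lb {E : BanachLattice} (f g : E -> R) (u v : E) : posdual f -> posdual g ->
  bl_zero ≼ u -> bl_zero ≼ v -> v ≼ u -> Hm f g u <= f v + g (u ⊕ ⊖v).
Proof. intros. destruct (Hm_spec f g u) as [HH _]; auto. Qed.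
Lemma Hm_glb {E : BanachLattice} (f g : E -> R) (u : E) (r : R) : posdual f -> posdual g ->
  bl_zero ≼ u -> (forall v, bl_zero ≼ v -> v ≼ u -> r <= f v + g (u ⊕ ⊖v)) -> r <= Hm f g u.
Proof. intros. destruct (Hm_spec f g u) as [_ HH]; auto. Qed.

Lemma Hm_nonneg {E : BanachLattice} (f g : E -> R) (u : E) : posdual f -> posdual g ->
  bl_zero ≼ u -> 0 <= Hm f g u.
Proof.
  intros Pf Pg pu. apply Hm_glb; auto. intros v pv vu.
  pose proof (proj2 Pf v pv). pose proof (proj2 Pg _ (sub_pos _ _ vu)). simpl in *. lra.
Qed.
Lemma Hm_le_f {E : BanachLattice} (f g : E -> R) (u : E) : posdual f -> posdual g ->
  bl_zero ≼ u -> Hm f g u <= f u.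
Proof.
  intros Pf Pg pu. pose proof (Hm_lb f g u u Pf Pg pu pu (bl_le_refl u)) as H.
  rewrite bl_addN, (df_zero g (proj1 Pg)) in H. lra.
Qed.
Lemma Hm_le_g {E : BanachLattice} (f g : E -> R) (u : E) : posdual f -> posdual g ->
  bl_zero ≼ u -> Hm f g u <= g u.
Proof.
  intros Pf Pg pu. pose proof (Hm_lb f g u bl_zero Pf Pg pu pos0 pu) as H.
  rewrite opp0, bl_add0, (df_zero f (proj1 Pf)) in H. lra.
Qed.

Lemma Hm_add {E : BanachLattice} (f g : E -> R) (u1 u2 : E) : posdual f -> posdual g ->
  bl_zero ≼ u1 -> bl_zero ≼ u2 -> Hm f g (u1 ⊕ u2) = Hm f g u1 + Hm f g u2.
Proof.
  intros Pf Pg p1 p2. pose proof (proj1 Pf) as Hf. pose proof (proj1 Pg) as Hg.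
  pose proof (pos_add _ _ p1 p2) as p12.
  apply Rle_antisym.
  - assert (A : forall v2, bl_zero ≼ v2 -> v2 ≼ u2 ->
        Hm f g (u1 ⊕ u2) - (f v2 + g (u2 ⊕ ⊖v2)) <= Hm f g u1).
    { intros v2 q2 l2. apply Hm_glb; auto. intros v1 q1 l1.
      pose proof (Hm_lb f g (u1 ⊕ u2) (v1 ⊕ v2) Pf Pg p12 (pos_add _ _ q1 q2) (le_add2 _ _ _ _ l1 l2)) as H.
      rewrite opp_add in H. lin Hf Hg. lra. }
    assert (Hm f g (u1 ⊕ u2) - Hm f g u1 <= Hm f g u2).
    { apply Hm_glb; auto. intros v2 q2 l2. pose proof (A v2 q2 l2). lra. }
    lra.
  - apply Hm_glb; auto. intros v pv vu.
    destruct (riesz v u1 u2 pv p1 p2 vu) as [v1 [v2 [q1 [l1 [q2 [l2 ->]]]]]].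
    pose proof (Hm_lb f g u1 v1 Pf Pg p1 q1 l1). pose proof (Hm_lb f g u2 v2 Pf Pg p2 q2 l2).
    rewrite opp_add. lin Hf Hg. lra.
Qed.

Lemma Hm_zero {E : BanachLattice} (f g : E -> R) : posdual f -> posdual g -> Hm f g bl_zero = 0.
Proof.
  intros Pf Pg. pose proof (Hm_add f g bl_zero bl_zero Pf Pg pos0 pos0) as H.
  rewrite bl_add0 in H. lra.
Qed.

Lemma Hm_scal {E : BanachLattice} (f g : E -> R) (a : R) (u : E) : posdual f -> posdual g ->
  0 < a -> bl_zero ≼ u -> Hm f g (bl_scal a u) = a * Hm f g u.
Proof.
  intros Pf Pg Ha pu. pose proof (proj1 Pf) as Hf. pose proof (proj1 Pg) as Hg.
  pose proof (scal_pos a u ltac:(lra) pu) as pau.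
  apply Rle_antisym.
  - assert (Hm f g (bl_scal a u) * / a <= Hm f g u).
    { apply Hm_glb; auto. intros v pv vu.
      pose proof (Hm_lb f g (bl_scal a u) (bl_scal a v) Pf Pg pau (scal_pos a v ltac:(lra) pv)
                   (bl_le_scal a _ _ ltac:(lra) vu)) as H.
      lin Hf Hg.
      apply Rmult_le_reg_l with a; auto.
      replace (a * (Hm f g (bl_scal a u) * / a)) with (Hm f g (bl_scal a u)) by (field; lra).
      lra. }
    apply Rmult_le_reg_l with (/ a). apply Rinv_0_lt_compat; auto.
    replace (/ a * (a * Hm f g u)) with (Hm f g u) by (field; lra). lra.
  - apply Hm_glb; auto. intros w pw wu.
    assert (pv : bl_zero ≼ bl_scal (/a) w) by (apply scal_pos; auto; left; apply Rinv_0_lt_compat; auto).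
    assert (vu : bl_scal (/a) w ≼ u).
    { pose proof (bl_le_scal (/a) _ _ ltac:(left; apply Rinv_0_lt_compat; auto) wu) as H.
      rewrite bl_scalA, Rinv_l, bl_scal1 in H; auto; lra. }
    pose proof (Hm_lb f g u _ Pf Pg pu pv vu) as H. lin Hf Hg.
    assert (a * Hm f g u <= a * (/ a * f w + (g u + - (/ a * g w)))) by (apply Rmult_le_compat_l; lra).
    replace (a * (/ a * f w + (g u + - (/ a * g w)))) with (f w + (a * g u + - g w)) in H0 by (field; lra).
    lra.
Qed.

Definition hm {E : BanachLattice} (f g : E -> R) (x : E) : R :=
  Hm f g (bl_join x bl_zero) - Hm f g (bl_join (⊖x) bl_zero).

Lemma pp_pos {E : BanachLattice} (x : E) : bl_zero ≼ bl_join x bl_zero.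
Proof. apply bl_join_ubr. Qed.

Lemma hm_repr {E : BanachLattice} (f g : E -> R) (p q x : E) : posdual f -> posdual g ->
  bl_zero ≼ p -> bl_zero ≼ q -> p ⊕ ⊖q = x -> hm f g x = Hm f g p - Hm f g q.
Proof.
  intros Pf Pg pp pq Hx. unfold hm.
  set (P := bl_join x bl_zero). set (Q := bl_join (⊖x) bl_zero).
  assert (HPQ : P ⊕ ⊖Q = x) by apply pp_decomp.
  assert (Heq : P ⊕ q = p ⊕ Q).
  { rewrite <- (addNK P Q), HPQ, <- Hx, swap_r, addNK; try apply swap_r; reflexivity. }
  pose proof (Hm_add f g P q Pf Pg (pp_pos _) pq) as H1.
  pose proof (Hm_add f g p Q Pf Pg pp (pp_pos _)) as H2.
  rewrite Heq in H1. lra.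
Qed.

Lemma hm_pos {E : BanachLattice} (f g : E -> R) (u : E) : posdual f -> posdual g ->
  bl_zero ≼ u -> hm f g u = Hm f g u.
Proof.
  intros Pf Pg pu. rewrite (hm_repr f g u bl_zero u Pf Pg pu pos0).
  rewrite Hm_zero; auto; lra. rewrite opp0, bl_add0; auto.
Qed.

Lemma meet_exists {E : BanachLattice} (f g : E -> R) : posdual f -> posdual g ->
  exists h, is_dual h /\ dual_le h f /\ dual_le h g /\
    (forall k, is_dual k -> dual_le k f -> dual_le k g -> dual_le k h).
Proof.
  intros Pf Pg. pose proof (proj1 Pf) as Hf. pose proof (proj1 Pg) as Hg.
  exists (hm f g). split; [|split; [|split]].
  - split; [|split].
    + intros x y.
      rewrite (hm_repr f g (bl_join x bl_zero ⊕ bl_join y bl_zero)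
                 (bl_join (⊖x) bl_zero ⊕ bl_join (⊖y) bl_zero) (x ⊕ y) Pf Pg).
      * rewrite !Hm_add; auto using pp_pos. unfold hm. lra.
      * apply pos_add; apply pp_pos.
      * apply pos_add; apply pp_pos.
      * rewrite opp_add, add4, !pp_decomp; auto.
    + intros a x. destruct (Rtotal_order a 0) as [Ha|[Ha|Ha]].
      * rewrite (hm_repr f g (bl_scal (-a) (bl_join (⊖x) bl_zero)) (bl_scal (-a) (bl_join x bl_zero)) _ Pf Pg).
        -- rewrite !Hm_scal; auto using pp_pos; try lra. unfold hm. ring.
        -- apply scal_pos; auto using pp_pos; lra.
        -- apply scal_pos; auto using pp_pos; lra.
        -- rewrite <- (pp_decomp x) at 3. rewrite bl_scalDr, scal_opp.
           rewrite !scalN, oppK, bl_addC. auto.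
      * subst a. rewrite scal_0x, hm_pos, Hm_zero; auto using pos0. ring.
      * rewrite (hm_repr f g (bl_scal a (bl_join x bl_zero)) (bl_scal a (bl_join (⊖x) bl_zero)) _ Pf Pg).
        -- rewrite !Hm_scal; auto using pp_pos. unfold hm. ring.
        -- apply scal_pos; auto using pp_pos; lra.
        -- apply scal_pos; auto using pp_pos; lra.
        -- rewrite <- scal_opp, <- bl_scalDr, pp_decomp. auto.
    + destruct Hf as [_ [_ [C HC]]]. exists (2 * Rabs C). intros x. unfold hm.
      pose proof (Hm_nonneg f g _ Pf Pg (pp_pos x)).
      pose proof (Hm_nonneg f g _ Pf Pg (pp_pos (⊖x))).
      pose proof (Hm_le_f f g _ Pf Pg (pp_pos x)).
      pose proof (Hm_le_f f g _ Pf Pg (pp_pos (⊖x))).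
      pose proof (HC (bl_join x bl_zero)). pose proof (HC (bl_join (⊖x) bl_zero)).
      pose proof (Rle_abs (f (bl_join x bl_zero))). pose proof (Rle_abs (f (bl_join (⊖x) bl_zero))).
      pose proof (norm_pp x). pose proof (norm_pn x).
      pose proof (norm_nonneg (bl_join x bl_zero)). pose proof (norm_nonneg (bl_join (⊖x) bl_zero)).
      pose proof (Rle_abs C). pose proof (Rabs_pos C).
      assert (C * bl_norm (bl_join x bl_zero) <= Rabs C * bl_norm x).
      { apply Rle_trans with (Rabs C * bl_norm (bl_join x bl_zero)).
        apply Rmult_le_compat_r; auto. apply Rmult_le_compat_l; auto. }
      assert (C * bl_norm (bl_join (⊖x) bl_zero) <= Rabs C * bl_norm x).
      { apply Rle_trans with (Rabs C * bl_norm (bl_join (⊖x) bl_zero)).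
        apply Rmult_le_compat_r; auto. apply Rmult_le_compat_l; auto. }
      apply Rabs_le. lra.
  - intros u pu. rewrite hm_pos; auto. apply Hm_le_f; auto.
  - intros u pu. rewrite hm_pos; auto. apply Hm_le_g; auto.
  - intros k Hk Hkf Hkg u pu. rewrite hm_pos; auto. apply Hm_glb; auto.
    intros v pv vu. pose proof (Hkf v pv). pose proof (Hkg _ (sub_pos _ _ vu)).
    rewrite (df_add _ Hk), (df_opp _ Hk) in H0. simpl in *.
    replace (k u) with (k v + (k u + - k v)) by ring. lra.
Qed.

Definition is_meet {E : BanachLattice} (f g h : E -> R) :=
  is_dual h /\ dual_le h f /\ dual_le h g /\
    (forall k, is_dual k -> dual_le k f -> dual_le k g -> dual_le k h).

Definition mn {E : BanachLattice} (f g : E -> R) : E -> R :=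
  epsilon (inhabits (fun _ : E => 0)) (is_meet f g).

Lemma mn_spec {E : BanachLattice} (f g : E -> R) : posdual f -> posdual g -> is_meet f g (mn f g).
Proof. intros. unfold mn. apply epsilon_spec. apply meet_exists; auto. Qed.

Fixpoint lsum {A : Type} (F : A -> R) (l : list A) : R :=
  match l with nil => 0 | a :: t => F a + lsum F t end.

Lemma lsum_le {A : Type} (F G : A -> R) (l : list A) :
  (forall a, In a l -> F a <= G a) -> lsum F l <= lsum G l.
Proof.
  induction l as [|a t IH]; simpl; intros H. lra.
  pose proof (H a (or_introl eq_refl)). pose proof (IH (fun b Hb => H b (or_intror Hb))). lra.
Qed.
Lemma lsum_plus_const {A : Type} (F : A -> R) (c : R) (l : list A) :
  lsum (fun a => F a + c) l = lsum F l + INR (length l) * c.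
Proof. induction l as [|a t IH]; cbn [lsum length]. simpl; ring. rewrite IH, S_INR. ring. Qed.
Lemma lsum_const_ge {A : Type} (F : A -> R) (c : R) (l : list A) :
  (forall a, In a l -> c <= F a) -> INR (length l) * c <= lsum F l.
Proof.
  induction l as [|a t IH]; cbn [lsum length]; intros H. simpl; lra.
  pose proof (H a (or_introl eq_refl)). pose proof (IH (fun b Hb => H b (or_intror Hb))).
  rewrite S_INR. lra.
Qed.

Lemma key {E : BanachLattice} (l : list (E -> R)) :
  NoDup l -> (forall f, In f l -> posdual f) ->
  (forall f g, In f l -> In g l -> f <> g -> dual_disjoint f g) ->
  forall y, posdual y -> forall u, bl_zero ≼ u -> lsum (fun f => mn f y u) l <= y u.
Proof.
  induction l as [|x rest IH]; intros Hnd Hp Hd y Py u pu.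
  - simpl. apply (proj2 Py u pu).
  - inversion Hnd as [|? ? Hnotin Hnd']; subst.
    pose proof (Hp x (or_introl eq_refl)) as Px.
    destruct (mn_spec x y Px Py) as [Hw [Hwx [Hwy Hwg]]].
    set (y' := fun v => y v - mn x y v).
    assert (Py' : posdual y').
    { split. apply dual_ext with (fun v => 1 * y v + (-1) * mn x y v).
      intros; unfold y'; ring. apply dual_lin; auto. apply (proj1 Py).
      intros v pv. pose proof (Hwy v pv). unfold y'. simpl in *. lra. }
    pose proof (IH Hnd' (fun f H => Hp f (or_intror H))
                  (fun f g H1 H2 => Hd f g (or_intror H1) (or_intror H2)) y' Py' u pu) as H1.
    assert (H2 : lsum (fun f => mn f y u) rest <= lsum (fun f => mn f y' u) rest).
    { apply lsum_le. intros r Hr. pose proof (Hp r (or_intror Hr)) as Pr.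
      destruct (mn_spec r y Pr Py) as [Ha [Har [Hay _]]].
      destruct (mn_spec r y' Pr Py') as [_ [_ [_ Hg']]].
      apply Hg'; auto.
      intros v pv. unfold y'.
      assert (Hrx : r <> x) by (intro; subst; contradiction).
      destruct (Hd r x (or_intror Hr) (or_introl eq_refl) Hrx)
        as [mf [mg [[_ [Hrmf _]] [[_ [Hxmg _]] [_ [_ Hz]]]]]].
      set (k := fun v => 1 * (1 * mn r y v + 1 * mn x y v) + (-1) * y v).
      assert (Hk : is_dual k) by (apply dual_lin; [apply dual_lin; auto| apply (proj1 Py)]).
      assert (Hk1 : dual_le k mf).
      { intros w pw. unfold k. pose proof (Hwy w pw). pose proof (Har w pw). pose proof (Hrmf w pw).
        simpl in *. lra. }
      assert (Hk2 : dual_le k mg).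
      { intros w pw. unfold k. pose proof (Hay w pw). pose proof (Hwx w pw). pose proof (Hxmg w pw).
        simpl in *. lra. }
      pose proof (Hz k Hk Hk1 Hk2 v pv). unfold k in *. simpl in *. lra. }
    simpl. unfold y' in *. lra.
Qed.

Lemma nat_above (r : R) : exists n : nat, r <= INR n.
Proof.
  destruct (Rle_lt_dec r 0) as [H|H]. exists 0%nat. simpl; lra.
  destruct (archimed r) as [H1 _].
  assert (Hz : (0 <= up r)%Z) by (apply le_IZR; lra).
  exists (Z.to_nat (up r)). rewrite INR_IZR_INZ, Z2Nat.id; auto. lra.
Qed.

Theorem corollary3p5 (E : BanachLattice) (u0 : E) (delta : R)
    (D : (E -> R) -> Prop) :
  bl_le bl_zero u0 ->
  0 < delta ->
  (forall f, D f -> is_dual f /\ dual_pos f) ->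
  (forall f, D f -> delta <= f u0) ->
  almost_order_bounded u0 D ->
  exists M : nat,
    forall l : list (E -> R),
      NoDup l ->
      (forall f, In f l -> D f) ->
      (forall f g, In f l -> In g l -> f <> g -> dual_disjoint f g) ->
      (length l <= M)%nat.
Proof.
  intros pu0 Hdel HD Hdl Haob.
  destruct (Haob (delta / 2) ltac:(lra)) as [y [Hy [Hyp Hx]]].
  assert (Py : posdual y) by (split; auto).
  destruct (nat_above (2 * y u0 / delta)) as [M HM].
  exists M. intros l Hnd Hin Hdis.
  assert (Hel : forall f, In f l -> f u0 <= mn f y u0 + delta / 2).
  { intros f Hf. pose proof (Hin f Hf) as Df. pose proof (HD f Df) as Pf.
    destruct (Hx f Df) as [z [b [Hz [Hb [Hzl [Hzu [Hrho Hfe]]]]]]].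
    destruct Hrho as [m [[Hm [Hbm [Hbm' _]]] Hm1]].
    destruct (mn_spec f y Pf Py) as [_ [_ [_ Hg]]].
    set (k := fun v => 1 * f v + (- (delta / 2)) * m v).
    assert (Hk : is_dual k) by (apply dual_lin; auto; apply (proj1 Pf)).
    assert (Hmpos : forall v, bl_zero ≼ v -> 0 <= m v).
    { intros v pv. pose proof (Hbm v pv). pose proof (Hbm' v pv). simpl in *. lra. }
    assert (Hk1 : dual_le k f).
    { intros v pv. unfold k. pose proof (Hmpos v pv).
      assert (0 <= delta / 2 * m v) by (apply Rmult_le_pos; lra). lra. }
    assert (Hk2 : dual_le k y).
    { intros v pv. unfold k. rewrite Hfe. pose proof (Hbm v pv). pose proof (Hzu v pv).
      simpl in *.
      assert (delta / 2 * b v <= delta / 2 * m v) by (apply Rmult_le_compat_l; lra). lra. }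
    pose proof (Hg k Hk Hk1 Hk2 u0 pu0) as H. unfold k in H.
    rewrite abs_of_pos in Hm1; auto.
    assert (delta / 2 * m u0 <= delta / 2 * 1) by (apply Rmult_le_compat_l; lra). lra. }
  pose proof (key l Hnd (fun f H => HD f (Hin f H)) Hdis y Py u0 pu0) as Hk.
  pose proof (lsum_le _ _ l Hel) as H1. rewrite lsum_plus_const in H1.
  pose proof (lsum_const_ge (fun f => f u0) delta l (fun f H => Hdl f (Hin f H))) as H2.
  assert (H3 : INR (length l) * delta <= 2 * y u0) by lra.
  assert (H4 : 2 * y u0 <= INR M * delta).
  { replace (2 * y u0) with (2 * y u0 / delta * delta) by (field; lra).
    apply Rmult_le_compat_r; lra. }
  apply INR_le. apply Rmult_le_reg_r with delta; auto. lra.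
Qed.
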